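(* Let $t\geq 1$ and let $r_1,\ldots,r_t$ be positive integers with $\gcd(r_i,r_j)=1$ for all $i\neq j$. Let $F$ be the free group on $\{x_1,\ldots,x_t\}$ and let $S$ be the normal closure in $F$ of $\{x_1^{r_1},\ldots,x_t^{r_t}\}$ (so $F/S$ is the free product of the cyclic groups $\langle x_i\mid x_i^{r_i}\rangle\cong\mathbb{Z}_{r_i}$). Define $\rho_1(S)=S$ and $\rho_{n+1}(S)=[\rho_n(S),F]$ for $n\geq 1$. Then (i) $S\cap\gamma_2(F)=\rho_2(S)$; (ii) $S\cap\gamma_3(F)=\rho_3(S)$, and consequently $\rho_2(S)\cap\gamma_3(F)=\rho_3(S)$.
   Context: $\gamma_k(F)$ denotes the $k$-th term of the lower central series of $F$: $\gamma_1(F)=F$, $\gamma_{k+1}(F)=[\gamma_k(F),F]$. For subgroups $A,B$, $[A,B]$ is the subgroup generated by all commutators $[a,b]$, $a\in A$, $b\in B$. *)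

(* Defs.v *)
(* A concrete model of the free group F on
   generators x_0, ..., x_{t-1} (indexed by 'I_t) as words over letters
   (i, b) : 'I_t * bool, where (i, false) = x_i and (i, true) = x_i^-1.
   Two words denote the same element of F iff their free reductions coincide.
   Subsets of F are predicates on words closed under this equivalence. *)
From mathcomp Require Import all_boot.
Set Implicit Arguments. Unset Strict Implicit. Unset Printing Implicit Defensive.

Section FreeGroup.
Variable t : nat.

Definition letter := ('I_t * bool)%type.
Definition word := seq letter.

Definition linv (a : letter) : letter := (a.1, ~~ a.2).

Definition rcons_red (a : letter) (w : word) : word :=
  match w with
  | b :: w' => if b == linv a then w' else a :: w
  | [::] => [:: a]
  end.

Definition reduce (w : word) : word := foldr rcons_red [::] w.

Definition weq (u v : word) : Prop := reduce u = reduce v.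

Definition wone : word := [::].
Definition wmul (u v : word) : word := u ++ v.
Definition winv (u : word) : word := rev (map linv u).
Definition wconj (u g : word) : word := winv g ++ u ++ g.
Definition wcomm (u v : word) : word := winv u ++ winv v ++ u ++ v.

Definition gen_x (i : 'I_t) : word := [:: (i, false)].
Definition gen_pow (i : 'I_t) (n : nat) : word := nseq n (i, false).

Inductive subgen (X : word -> Prop) : word -> Prop :=
| subgen_base u : X u -> subgen X u
| subgen_one : subgen X wone
| subgen_mul u v : subgen X u -> subgen X v -> subgen X (wmul u v)
| subgen_inv u : subgen X u -> subgen X (winv u)
| subgen_eq u v : subgen X u -> weq u v -> subgen X v.

Definition normal_closure (X : word -> Prop) : word -> Prop :=
  subgen (fun w => exists u g, X u /\ w = wconj u g).

Definition commsub (A B : word -> Prop) : word -> Prop :=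
  subgen (fun w => exists a b, A a /\ B b /\ w = wcomm a b).

Definition Fall : word -> Prop := fun _ => True.

(* lower central series: gamma 1 = F, gamma (k+1) = [gamma k, F];
   (gamma 0 = F as a harmless junk value) *)
Fixpoint gamma (k : nat) : word -> Prop :=
  match k with
  | 0 | 1 => Fall
  | k'.+1 => commsub (gamma k') Fall
  end.

(* rho 1 S = S, rho (n+1) S = [rho n S, F]; (rho 0 S = S junk) *)
Fixpoint rho (S : word -> Prop) (n : nat) : word -> Prop :=
  match n with
  | 0 | 1 => S
  | n'.+1 => commsub (rho S n') Fall
  end.

Definition Srel (r : 'I_t -> nat) : word -> Prop :=
  normal_closure (fun w => exists i, w = gen_pow i (r i)).

Definition set_eq (A B : word -> Prop) : Prop := forall w, A w <-> B w.
Definition set_cap (A B : word -> Prop) : word -> Prop := fun w => A w /\ B w.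

End FreeGroup.

(* Main.v *)
From Stdlib Require Import Setoid Morphisms ZArith Lia.
Require Import Defs.
From mathcomp Require Import all_boot.
From mathcomp Require Import zify.
Set Implicit Arguments. Unset Strict Implicit. Unset Printing Implicit Defensive.

Section Red.
Variable t : nat.
Local Notation word := (word t).
Local Notation letter := (letter t).
Implicit Types u v w x : word.

Lemma linvK (a : letter) : linv (linv a) = a.
Proof. by case: a => i b; rewrite /linv /= negbK. Qed.

Fixpoint redb (w : word) : bool :=
  match w with
  | a :: ((b :: _) as w') => (b != linv a) && redb w'
  | _ => true
  end.

Lemma redb_tail a (w : word) : redb (a :: w) -> redb w.
Proof. by case: w => //= b w /andP []. Qed.

Lemma redb_rcons a w : redb w -> redb (rcons_red a w).
Proof.
case: w => [|b w] //= H.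
case: ifP => E; first exact: redb_tail H.
by rewrite /= E H.
Qed.

Lemma rcons_redK a w : redb w -> rcons_red a (rcons_red (linv a) w) = w.
Proof.
case: w => [|b w] /=; first by rewrite eqxx.
rewrite linvK; case: (eqVneq b a) => [->|ne] H.
  case: w H => [|c w] //= /andP [c1 _]; by rewrite (negbTE c1).
by rewrite /= eqxx.
Qed.

Definition red_app (u w : word) := foldr (@rcons_red t) w u.

Lemma red_app_cat u v w : red_app (u ++ v) w = red_app u (red_app v w).
Proof. by rewrite /red_app foldr_cat. Qed.

Lemma redb_red_app u w : redb w -> redb (red_app u w).
Proof. by elim: u => //= a u IH H; apply: redb_rcons; apply: IH. Qed.

Lemma red_app_rcons a x w : redb w ->
  red_app (rcons_red a x) w = rcons_red a (red_app x w).
Proof.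
move=> Hw; case: x => [|b x] //=.
case: ifP => //= /eqP ->.
by rewrite rcons_redK //; apply: redb_red_app.
Qed.

Lemma red_app_reduce u w : redb w -> red_app (reduce u) w = red_app u w.
Proof.
move=> Hw; elim: u => //= a u IH.
by rewrite red_app_rcons // IH.
Qed.

Lemma redb_reduce u : redb (reduce u).
Proof. exact: (@redb_red_app u [::]). Qed.

Lemma reduce_cat u v : reduce (u ++ v) = red_app (reduce u) (reduce v).
Proof.
rewrite red_app_reduce ?redb_reduce //.
by rewrite /reduce -/(red_app _ _) -/(red_app _ _) -red_app_cat.
Qed.

Lemma winv_cat (u v : word) : winv (u ++ v) = winv v ++ winv u.
Proof. by rewrite /winv map_cat rev_cat. Qed.

Lemma winvK (u : word) : winv (winv u) = u.
Proof.
rewrite /winv map_rev revK -map_comp.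
by rewrite -[RHS]map_id; apply: eq_map => a /=; rewrite linvK.
Qed.

Lemma winv_cons a (u : word) : winv (a :: u) = winv u ++ [:: linv a].
Proof. by rewrite /winv /= rev_cons cats1. Qed.

Lemma red_app_winv u w : redb w -> red_app (u ++ winv u) w = w.
Proof.
elim: u w => [|a u IH] w Hw //=.
rewrite winv_cons catA red_app_cat IH /=; first by rewrite rcons_redK.
by apply: redb_rcons.
Qed.


Lemma weq_refl u : weq u u. Proof. by []. Qed.
Lemma weq_sym u v : weq u v -> weq v u. Proof. by rewrite /weq => ->. Qed.
Lemma weq_trans u v w : weq u v -> weq v w -> weq u w.
Proof. by rewrite /weq => -> ->. Qed.

Lemma weq_catl u u' v : weq u u' -> weq (u ++ v) (u' ++ v).
Proof. by rewrite /weq !reduce_cat => ->. Qed.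
Lemma weq_catr u v v' : weq v v' -> weq (u ++ v) (u ++ v').
Proof. by rewrite /weq !reduce_cat => ->. Qed.
Lemma weq_cat u u' v v' : weq u u' -> weq v v' -> weq (u ++ v) (u' ++ v').
Proof. move=> H1 H2; apply: weq_trans (weq_catl _ H1) (weq_catr _ H2). Qed.

Lemma weq_mulV u : weq (u ++ winv u) [::].
Proof.
rewrite /weq reduce_cat red_app_reduce ?redb_reduce //.
by rewrite /reduce -/(red_app _ _) -red_app_cat red_app_winv.
Qed.

Lemma weq_Vmul u : weq (winv u ++ u) [::].
Proof. by rewrite -{2}(winvK u); apply: weq_mulV. Qed.

Lemma weq_inv u v : weq u v -> weq (winv u) (winv v).
Proof.
move=> H.
apply: weq_trans (_ : weq (winv u) (winv u ++ v ++ winv v)) _.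
  by apply: weq_sym; rewrite -[X in weq _ X]cats0; apply: weq_catr; apply: weq_mulV.
rewrite catA; apply: weq_trans (weq_catl _ (_ : weq (winv u ++ v) [::])) _ => //.
apply: weq_trans (weq_catr _ (weq_sym H)) _; exact: weq_Vmul.
Qed.

End Red.

Section Grp.
Variable t : nat.
Implicit Types u v w x g a b c : word t.

#[export] Instance weq_equiv : Equivalence (@weq t).
Proof. split; [exact: weq_refl | exact: weq_sym | exact: weq_trans]. Qed.
#[export] Instance cat_proper : Proper (@weq t ==> @weq t ==> @weq t) cat.
Proof. move=> ? ? ? ? ? ?; exact: weq_cat. Qed.
#[export] Instance winv_proper : Proper (@weq t ==> @weq t) (@winv t).
Proof. move=> ? ?; exact: weq_inv. Qed.

Lemma cancR u x : weq (u ++ winv u ++ x) x.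
Proof. by rewrite catA (weq_mulV u). Qed.
Lemma cancL u x : weq (winv u ++ u ++ x) x.
Proof. by rewrite catA (weq_Vmul u). Qed.
Lemma cancR' u x y : weq (y ++ u ++ winv u ++ x) (y ++ x).
Proof. by rewrite cancR. Qed.
Lemma cancL' u x y : weq (y ++ winv u ++ u ++ x) (y ++ x).
Proof. by rewrite cancL. Qed.

Class nsub (N : word t -> Prop) : Prop := {
  ns_one : N [::];
  ns_mul : forall u v, N u -> N v -> N (u ++ v);
  ns_inv : forall u, N u -> N (winv u);
  ns_eq : forall u v, N u -> weq u v -> N v;
  ns_conj : forall u g, N u -> N (wconj u g) }.

Definition cong (N : word t -> Prop) u v := N (u ++ winv v).

Section Cong.
Variable N : word t -> Prop.
Context {HN : nsub N}.

Lemma N_one : N [::]. Proof. exact: (@ns_one N HN). Qed.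
Lemma Nmul u v : N u -> N v -> N (u ++ v). Proof. exact: (@ns_mul N HN). Qed.
Lemma Ninv u : N u -> N (winv u). Proof. exact: (@ns_inv N HN). Qed.
Lemma Neq u v : N u -> weq u v -> N v. Proof. exact: (@ns_eq N HN). Qed.
Lemma Nconj u g : N u -> N (wconj u g). Proof. exact: (@ns_conj N HN). Qed.

#[export] Instance N_proper : Proper (@weq t ==> iff) N.
Proof. move=> u v E; split=> H; [exact: Neq H E | exact: Neq H (weq_sym E)]. Qed.

Lemma N_conj' u g : N u -> N (g ++ u ++ winv g).
Proof. by move=> H; have := @ns_conj N HN u (winv g) H; rewrite /wconj winvK. Qed.

Lemma cong_refl u : cong N u u.
Proof. by rewrite /cong (weq_mulV u); apply: N_one. Qed.
Lemma cong_sym u v : cong N u v -> cong N v u.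
Proof. by move=> /Ninv; rewrite /cong winv_cat winvK. Qed.
Lemma cong_trans u v w : cong N u v -> cong N v w -> cong N u w.
Proof.
move=> H1 H2; have := Nmul H1 H2.
by rewrite -catA cancL'.
Qed.

#[export] Instance cong_equiv : Equivalence (cong N).
Proof. split; [exact: cong_refl | exact: cong_sym | exact: cong_trans]. Qed.

#[export] Instance cong_weq_proper : Proper (@weq t ==> @weq t ==> iff) (cong N).
Proof. by move=> u u' E v v' E'; rewrite /cong E E'. Qed.

Lemma weq_cong u v : weq u v -> cong N u v.
Proof. by move=> E; rewrite E; apply: cong_refl. Qed.

Lemma cong_catR u v w : cong N u v -> cong N (u ++ w) (v ++ w).
Proof. by rewrite /cong winv_cat -catA cancR'. Qed.
Lemma cong_catL u v w : cong N u v -> cong N (w ++ u) (w ++ v).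
Proof. by move=> /(N_conj' w); rewrite /cong winv_cat !catA. Qed.

#[export] Instance cat_cong_proper : Proper (cong N ==> cong N ==> cong N) cat.
Proof.
move=> u u' E v v' E'; apply: cong_trans (cong_catR _ E) _; exact: cong_catL.
Qed.

Lemma cong_invP u v : cong N u v -> cong N (winv u) (winv v).
Proof.
rewrite /cong winvK => /cong_sym H.
have := N_conj' (winv u) H.
by rewrite winvK -!catA (weq_Vmul u) cats0.
Qed.

#[export] Instance winv_cong_proper : Proper (cong N ==> cong N) (@winv t).
Proof. move=> ? ?; exact: cong_invP. Qed.

Lemma congN u : N u <-> cong N u [::].
Proof. by rewrite /cong cats0. Qed.

#[export] Instance N_cong_proper : Proper (cong N ==> iff) N.
Proof. by move=> u v E; rewrite !congN E. Qed.

End Cong.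

Definition grp (H : word t -> Prop) :=
  [/\ H [::], (forall u v, H u -> H v -> H (u ++ v)),
      (forall u, H u -> H (winv u)) & (forall u v, H u -> weq u v -> H v)].

Lemma subgen_min (X H : word t -> Prop) : grp H -> (forall u, X u -> H u) ->
  forall u, subgen X u -> H u.
Proof.
case=> H1 H2 H3 H4 HX u; elim => {u}.
- exact: HX.
- exact: H1.
- move=> u v _ ? _ ?; exact: H2.
- move=> u _ ?; exact: H3.
- move=> u v _ Hu E; exact: H4 Hu E.
Qed.

Lemma subgen_nsub (X : word t -> Prop) :
  (forall u g, X u -> subgen X (wconj u g)) -> nsub (subgen X).
Proof.
move=> HX; constructor.
- exact: subgen_one.
- exact: subgen_mul.
- exact: subgen_inv.
- exact: subgen_eq.
move=> u g; elim => {u}.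
- move=> u; exact: HX.
- apply: subgen_eq (subgen_one _) _; rewrite /wconj /=.
  by rewrite (weq_Vmul g).
- move=> u v _ Hu _ Hv; apply: subgen_eq (subgen_mul Hu Hv) _.
  by rewrite /wconj /wmul -!catA cancR'.
- move=> u _ Hu; apply: subgen_eq (subgen_inv Hu) _.
  by rewrite /wconj !winv_cat winvK catA.
- move=> u v _ Hu E; apply: subgen_eq Hu _.
  by rewrite /wconj E.
Qed.

End Grp.

Section Pow.
Variable t : nat.
Implicit Types u v w x g h c d : word t.

Fixpoint wpow g (n : nat) : word t :=
  match n with 0 => [::] | n'.+1 => g ++ wpow g n' end.

Lemma wpowD g n m : wpow g (n + m) = wpow g n ++ wpow g m.
Proof. by elim: n => //= n ->; rewrite catA. Qed.

Lemma wpowSr g n : wpow g n.+1 = wpow g n ++ g.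
Proof. by rewrite -addn1 wpowD /= cats0. Qed.

Lemma wpow_inv g n : winv (wpow g n) = wpow (winv g) n.
Proof. by elim: n => //= n IH; rewrite winv_cat IH -wpowSr. Qed.

Lemma wpowM g n m : wpow g (n * m) = wpow (wpow g n) m.
Proof. by elim: m => [|m IH]; rewrite ?muln0 //= mulnS wpowD IH. Qed.

Lemma wpow_nil n : wpow [::] n = [::] :> word t.
Proof. by elim: n. Qed.

Lemma gen_powE (i : 'I_t) n : gen_pow i n = wpow (gen_x i) n.
Proof. by elim: n => //= n IH; rewrite IH. Qed.

Lemma wpow_canc h k n m : weq (h ++ k) [::] ->
  weq (wpow h n ++ wpow k m) (wpow h (n - m) ++ wpow k (m - n)).
Proof.
move=> Hhk; elim: n m => [|n IH] [|m]; rewrite ?subn0 ?cats0 //=.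
rewrite !subSS -IH -[h ++ wpow h n]/(wpow h n.+1) wpowSr -!catA; apply: weq_catr.
by rewrite catA Hhk.
Qed.

Definition zpow g (z : Z) : word t :=
  if (0 <=? z)%Z then wpow g (Z.to_nat z) else wpow (winv g) (Z.to_nat (- z)).

Lemma zpow_pos g n : zpow g (Z.of_nat n) = wpow g n.
Proof. by rewrite /zpow; case: (Z.leb_spec 0 (Z.of_nat n)) => H; [rewrite Nat2Z.id | lia]. Qed.

Lemma zpow0 g : zpow g 0 = [::].
Proof. by []. Qed.

Lemma zpowD g a b : weq (zpow g a ++ zpow g b) (zpow g (a + b)).
Proof.
rewrite /zpow.
have Hgi : weq (g ++ winv g) [::] by apply: weq_mulV.
have Hig : weq (winv g ++ g) [::] by apply: weq_Vmul.
case: (Z.leb_spec 0 a) => Ha; case: (Z.leb_spec 0 b) => Hb.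
- case: (Z.leb_spec 0 (a + b)) => Hab; last lia.
  by rewrite -wpowD; have -> : (Z.to_nat (a + b) = Z.to_nat a + Z.to_nat b)%nat by lia.
- rewrite wpow_canc //.
  case: (Z.leb_spec 0 (a + b)) => Hab.
    have -> : (Z.to_nat (- b) - Z.to_nat a = 0)%nat by lia.
    by rewrite cats0; have -> : (Z.to_nat a - Z.to_nat (- b) = Z.to_nat (a + b))%nat by lia.
  have -> : (Z.to_nat a - Z.to_nat (- b) = 0)%nat by lia.
  by have -> : (Z.to_nat (- b) - Z.to_nat a = Z.to_nat (- (a + b)))%nat by lia.
- rewrite wpow_canc //.
  case: (Z.leb_spec 0 (a + b)) => Hab.
    have -> : (Z.to_nat (- a) - Z.to_nat b = 0)%nat by lia.
    by have -> : (Z.to_nat b - Z.to_nat (- a) = Z.to_nat (a + b))%nat by lia.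
  have -> : (Z.to_nat b - Z.to_nat (- a) = 0)%nat by lia.
  by rewrite cats0; have -> : (Z.to_nat (- a) - Z.to_nat b = Z.to_nat (- (a + b)))%nat by lia.
- case: (Z.leb_spec 0 (a + b)) => Hab; first lia.
  by rewrite -wpowD; have -> : (Z.to_nat (- (a + b)) = Z.to_nat (- a) + Z.to_nat (- b))%nat by lia.
Qed.

Lemma zpow_inv g a : weq (winv (zpow g a)) (zpow g (- a)).
Proof.
rewrite /zpow.
case: (Z.leb_spec 0 a) => Ha; case: (Z.leb_spec 0 (- a)) => Hb; rewrite wpow_inv.
- by have -> : a = 0%Z by lia.
- by rewrite Z.opp_involutive.
- by rewrite winvK.
- lia.
Qed.

Lemma zpowM g (r : nat) q : weq (zpow g (Z.of_nat r * q)) (zpow (wpow g r) q).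
Proof.
rewrite /zpow.
case: (Z.leb_spec 0 q) => Hq.
  case: (Z.leb_spec 0 (Z.of_nat r * q)) => H; last lia.
  by rewrite -wpowM; have -> : Z.to_nat (Z.of_nat r * q) = (r * Z.to_nat q)%nat by lia.
case: r => [|r].
  by rewrite /= wpow_nil.
case: (Z.leb_spec 0 (Z.of_nat r.+1 * q)) => H; first lia.
rewrite wpow_inv -wpowM.
by have -> : Z.to_nat (- (Z.of_nat r.+1 * q)) = (r.+1 * Z.to_nat (- q))%nat by lia.
Qed.

Lemma wpow_weq g g' n : weq g g' -> weq (wpow g n) (wpow g' n).
Proof. by move=> E; elim: n => //= n ->; rewrite E. Qed.

Lemma zpow_weq g g' z : weq g g' -> weq (zpow g z) (zpow g' z).
Proof. by move=> E; rewrite /zpow; case: ifP => _; apply: wpow_weq; rewrite E. Qed.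

Section CongPow.
Variable N : word t -> Prop.
Context {HN : nsub N}.

Lemma wpow_cong g g' n : cong N g g' -> cong N (wpow g n) (wpow g' n).
Proof. by move=> E; elim: n => //= [|n ->]; [reflexivity | rewrite E; reflexivity]. Qed.

Lemma zpow_cong g g' z : cong N g g' -> cong N (zpow g z) (zpow g' z).
Proof. by move=> E; rewrite /zpow; case: ifP => _; apply: wpow_cong; rewrite E; reflexivity. Qed.

Definition central c := forall u, cong N (c ++ u) (u ++ c).

Lemma central_nil : central [::].
Proof. by move=> u; rewrite cats0; reflexivity. Qed.

Lemma central_cat c d : central c -> central d -> central (c ++ d).
Proof.
move=> Hc Hd u; rewrite -catA (Hd u) catA (Hc u) -catA; reflexivity.
Qed.

Lemma central_inv c : central c -> central (winv c).
Proof.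
move=> Hc u; have := Hc (winv c ++ u ++ winv c).
rewrite cancR -!catA (weq_Vmul c) cats0 => H; symmetry; exact: H.
Qed.

Lemma central_weq c d : weq c d -> central c -> central d.
Proof. by move=> E Hc u; rewrite -E; apply: Hc. Qed.

Lemma central_wpow c n : central c -> central (wpow c n).
Proof. by move=> Hc; elim: n => [|n IH] /=; [apply: central_nil | apply: central_cat]. Qed.

Lemma central_zpow c z : central c -> central (zpow c z).
Proof.
by move=> Hc; rewrite /zpow; case: ifP => _; apply: central_wpow => //; apply: central_inv.
Qed.

Fixpoint prodz (gs : seq (word t)) (m : nat -> Z) : word t :=
  match gs with
  | [::] => [::]
  | g :: gs' => zpow g (m 0%nat) ++ prodz gs' (fun k => m k.+1)
  end.

Lemma prodz_ext gs m m' : (forall k, m k = m' k) -> prodz gs m = prodz gs m'.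
Proof.
elim: gs m m' => //= g gs IH m m' E; rewrite E; congr (_ ++ _); apply: IH => k; exact: E.
Qed.

Lemma prodz0 gs : prodz gs (fun _ => 0%Z) = [::].
Proof. by elim: gs => //= g gs ->. Qed.

Lemma central_prodz gs m : (forall g, g \in gs -> central g) -> central (prodz gs m).
Proof.
elim: gs m => [|g gs IH] m Hg /=; first exact: central_nil.
apply: central_cat; first by apply: central_zpow; apply: Hg; rewrite inE eqxx.
by apply: IH => h Hh; apply: Hg; rewrite inE Hh orbT.
Qed.

Lemma prodz_mul gs m m' : (forall g, g \in gs -> central g) ->
  cong N (prodz gs m ++ prodz gs m') (prodz gs (fun k => m k + m' k)%Z).
Proof.
elim: gs m m' => [|g gs IH] m m' Hg /=; first by reflexivity.
have Hg' : forall h, h \in gs -> central h by move=> h Hh; apply: Hg; rewrite inE Hh orbT.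
have Hz : central (zpow g (m' 0%nat)) by apply: central_zpow; apply: Hg; rewrite inE eqxx.
rewrite -catA (catA (prodz gs _)) -(Hz (prodz gs _)) -catA catA.
rewrite zpowD; apply: cong_catL; exact: IH.
Qed.

Lemma prodz_inv gs m : (forall g, g \in gs -> central g) ->
  cong N (winv (prodz gs m)) (prodz gs (fun k => - m k)%Z).
Proof.
elim: gs m => [|g gs IH] m Hg /=; first by reflexivity.
have Hg' : forall h, h \in gs -> central h by move=> h Hh; apply: Hg; rewrite inE Hh orbT.
rewrite winv_cat.
have Hz : central (winv (zpow g (m 0%nat))).
  by apply: central_inv; apply: central_zpow; apply: Hg; rewrite inE eqxx.
rewrite -(Hz (winv (prodz gs _))) zpow_inv; apply: cong_catL.
by rewrite (IH _ Hg'); reflexivity.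
Qed.

Definition Span gs w := exists m, cong N w (prodz gs m).

Section SpanS.
Variable gs : seq (word t).
Hypothesis Hgs : forall g, g \in gs -> central g.

Lemma Span_one : Span gs [::].
Proof. by exists (fun _ => 0%Z); rewrite prodz0; reflexivity. Qed.

Lemma Span_mul u v : Span gs u -> Span gs v -> Span gs (u ++ v).
Proof.
move=> [m Hm] [m' Hm']; exists (fun k => m k + m' k)%Z.
by rewrite Hm Hm' prodz_mul //; reflexivity.
Qed.

Lemma Span_inv u : Span gs u -> Span gs (winv u).
Proof.
move=> [m Hm]; exists (fun k => - m k)%Z.
by rewrite Hm prodz_inv //; reflexivity.
Qed.

Lemma Span_cong u v : Span gs u -> cong N u v -> Span gs v.
Proof. by move=> [m Hm] E; exists m; rewrite -E. Qed.

Lemma Span_weq u v : Span gs u -> weq u v -> Span gs v.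
Proof. by move=> H E; apply: Span_cong H _; rewrite E; reflexivity. Qed.

Lemma Span_N u : N u -> Span gs u.
Proof. by move=> H; apply: Span_cong Span_one _; symmetry; rewrite -congN. Qed.

End SpanS.


End CongPow.
End Pow.

Notation H3 := (Z * Z * Z)%type.
Definition h1 : H3 := (0%Z, 0%Z, 0%Z).
Definition hmul (x y : H3) : H3 :=
  let: (a, b, c) := x in let: (a', b', c') := y in
  ((a + a')%Z, (b + b')%Z, (c + c' + a * b')%Z).
Definition hinv (x : H3) : H3 :=
  let: (a, b, c) := x in ((- a)%Z, (- b)%Z, (- c + a * b)%Z).

Lemma hmulA x y z : hmul x (hmul y z) = hmul (hmul x y) z.
Proof. case: x => [[a b] c]; case: y => [[a' b'] c']; case: z => [[a'' b''] c''] /=; congr (_, _, _); ring. Qed.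
Lemma hmul1 x : hmul h1 x = x.
Proof. case: x => [[a b] c] /=; congr (_, _, _); ring. Qed.
Lemma hmulr1 x : hmul x h1 = x.
Proof. case: x => [[a b] c] /=; congr (_, _, _); ring. Qed.
Lemma hmulV x : hmul x (hinv x) = h1.
Proof. case: x => [[a b] c] /=; rewrite /h1; congr (_, _, _); ring. Qed.
Lemma hinvM x y : hinv (hmul x y) = hmul (hinv y) (hinv x).
Proof. case: x => [[a b] c]; case: y => [[a' b'] c'] /=; congr (_, _, _); ring. Qed.

Section Heis.
Variable t : nat.
Implicit Types u v w g : word t.
Variables i j : 'I_t.

Definition limg (l : letter t) : H3 :=
  let s := if l.2 then (-1)%Z else 1%Z in
  if l.1 == i then (s, 0%Z, 0%Z) else if l.1 == j then (0%Z, s, 0%Z) else h1.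

Definition phi (w : word t) : H3 := foldr (fun l acc => hmul (limg l) acc) h1 w.

Lemma phi_cons a w : phi (a :: w) = hmul (limg a) (phi w).
Proof. by []. Qed.
Lemma phi_nil : phi [::] = h1.
Proof. by []. Qed.

Lemma phi_cat u v : phi (u ++ v) = hmul (phi u) (phi v).
Proof. elim: u => [|a u IH]; [by rewrite cat0s phi_nil hmul1 | by rewrite cat_cons !phi_cons IH hmulA]. Qed.

Lemma limg_inv l : limg (linv l) = hinv (limg l).
Proof.
case: l => k b; rewrite /limg /linv /=.
by case: (k == i); case: (k == j); case: b => /=.
Qed.

Lemma phi_rcons l w : phi (rcons_red l w) = hmul (limg l) (phi w).
Proof.
case: w => [|b w] //=; case: ifP => //= /eqP ->.
by rewrite limg_inv hmulA hmulV hmul1.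
Qed.

Lemma phi_reduce w : phi (reduce w) = phi w.
Proof. by elim: w => //= a w IH; rewrite phi_rcons IH. Qed.

Lemma phi_weq u v : weq u v -> phi u = phi v.
Proof. by rewrite /weq => E; rewrite -phi_reduce E phi_reduce. Qed.

Lemma phi_inv u : phi (winv u) = hinv (phi u).
Proof.
elim: u => [|a u IH] /=; first by [].
by rewrite winv_cons phi_cat IH /= hmulr1 limg_inv hinvM.
Qed.

Lemma phi_wpow g n : phi g = h1 -> phi (wpow g n) = h1.
Proof. by move=> E; elim: n => //= n IH; rewrite phi_cat E IH. Qed.

Lemma phi_zpow1 g z : phi g = h1 -> phi (zpow g z) = h1.
Proof.
move=> E; rewrite /zpow; case: ifP => _; apply: phi_wpow => //.
by rewrite phi_inv E.
Qed.

Definition hcentral (x : H3) := x.1.1 = 0%Z /\ x.1.2 = 0%Z.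

Lemma phi_wpowc g n : hcentral (phi g) ->
  phi (wpow g n) = (0%Z, 0%Z, (Z.of_nat n * (phi g).2)%Z).
Proof.
case E: (phi g) => [[a b] c] [/= Ha Hb]; subst a b.
elim: n => [|n IH]; first by rewrite phi_nil.
rewrite [wpow _ _]/= phi_cat IH E; cbn [hmul fst snd]; congr (_, _, _); lia.
Qed.

Lemma phi_zpowc g z : hcentral (phi g) ->
  phi (zpow g z) = (0%Z, 0%Z, (z * (phi g).2)%Z).
Proof.
move=> Hc; rewrite /zpow; case: (Z.leb_spec 0 z) => Hz.
  by rewrite phi_wpowc // Z2Nat.id.
have Hc' : hcentral (phi (winv g)).
  by move: Hc; rewrite phi_inv; case: (phi g) => [[a b] c] [/= -> ->].
rewrite phi_wpowc // phi_inv Z2Nat.id; last lia.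
move: Hc; case: (phi g) => [[a b] c] [/= -> ->]; cbn [hinv fst snd]; congr (_, _, _); ring.
Qed.

End Heis.

Section Sub.
Variable t : nat.
Implicit Types u v w g f h s c : word t.

Lemma subgen_grp (X : word t -> Prop) : grp (subgen X).
Proof. split; [exact: subgen_one | exact: subgen_mul | exact: subgen_inv | exact: subgen_eq]. Qed.

Lemma subgen_mono (X Y : word t -> Prop) : (forall u, X u -> Y u) ->
  forall u, subgen X u -> subgen Y u.
Proof. move=> H; apply: subgen_min; first exact: subgen_grp. by move=> u /H /subgen_base. Qed.

Lemma nsub_grp (N : word t -> Prop) : nsub N -> grp N.
Proof. by move=> HN; split; [exact: N_one | exact: Nmul | exact: Ninv | exact: Neq]. Qed.

Lemma wconj_comm a b g : weq (wconj (wcomm a b) g) (wcomm (wconj a g) (wconj b g)).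
Proof.
rewrite /wconj /wcomm !winv_cat !winvK -!catA.
by rewrite !cancR.
Qed.

Lemma commsub_nsub (A : word t -> Prop) : nsub A -> nsub (commsub A (@Fall t)).
Proof.
move=> HA; apply: subgen_nsub => w g [a [b [Ha [_ ->]]]].
apply: subgen_eq _ (weq_sym (wconj_comm a b g)); apply: subgen_base.
by exists (wconj a g), (wconj b g); split => //; apply: Nconj.
Qed.

Lemma commsub_sub (A : word t -> Prop) : nsub A -> forall w, commsub A (@Fall t) w -> A w.
Proof.
move=> HA; apply: subgen_min; first exact: nsub_grp.
move=> w [a [b [Ha [_ ->]]]]; rewrite /wcomm.
by apply: Nmul; [apply: Ninv | apply: Nconj].
Qed.

Lemma central_commsub (A : word t -> Prop) (HA : nsub A) c :
  A c -> central (commsub A (@Fall t)) c.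
Proof.
move=> Hc u; rewrite /cong winv_cat.
apply: subgen_base; exists (winv c), (winv u); split; first exact: Ninv.
split => //.
by rewrite /wcomm !winvK -!catA.
Qed.

Lemma comm_mem (A : word t -> Prop) a b : A a -> commsub A (@Fall t) (wcomm a b).
Proof. by move=> Ha; apply: subgen_base; exists a, b. Qed.

End Sub.

Section Gen.
Variable t : nat.
Implicit Types u v w g f h s c a b : word t.

Section SpanMem.
Variable N : word t -> Prop.
Context {HN : nsub N}.

Lemma Span_tail h gs w : Span N gs w -> Span N (h :: gs) w.
Proof.
case=> m Hm; exists (fun k => if k is k'.+1 then m k' else 0%Z).
by rewrite /= (@prodz_ext _ gs _ m) //= cat0s.
Qed.

Lemma Span_head h gs : Span N (h :: gs) h.
Proof.
exists (fun k => if k is 0 then 1%Z else 0%Z).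
rewrite /= prodz0 /zpow /= !cats0; reflexivity.
Qed.

Lemma Span_mem gs g : g \in gs -> Span N gs g.
Proof.
elim: gs => //= h gs IH; rewrite inE => /orP [/eqP ->|H].
  exact: Span_head.
by apply: Span_tail; apply: IH.
Qed.
End SpanMem.

#[export] Instance wcomm_proper : Proper (@weq t ==> @weq t ==> @weq t) (@wcomm t).
Proof. by move=> a a' E b b' E'; rewrite /wcomm E E'. Qed.

Lemma winv_comm a b : winv (wcomm a b) = wcomm b a.
Proof. by rewrite /wcomm !winv_cat !winvK -!catA. Qed.

Lemma comm_commute a b : a ++ b = b ++ a -> weq (wcomm a b) [::].
Proof.
by move=> E; rewrite /wcomm E cancL (weq_Vmul a).
Qed.

Lemma comm_nil_r a : weq (wcomm a [::]) [::].
Proof. by apply: comm_commute; rewrite cats0. Qed.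
Lemma comm_nil_l a : weq (wcomm [::] a) [::].
Proof. by apply: comm_commute; rewrite cats0. Qed.

Lemma zpow_winv g z : weq (zpow (winv g) z) (winv (zpow g z)).
Proof.
rewrite zpow_inv /zpow; case: (Z.leb_spec 0 z) => Hz; case: (Z.leb_spec 0 (- z)) => Hz'.
- by have -> : z = 0%Z by lia.
- by rewrite Z.opp_involutive.
- by rewrite winvK.
- lia.
Qed.

End Gen.

Lemma coprimeZ (a b : nat) (x y : Z) : (0 < b)%nat -> coprime a b ->
  (Z.of_nat a * x = Z.of_nat b * y)%Z ->
  exists q, x = (Z.of_nat b * q)%Z /\ y = (Z.of_nat a * q)%Z.
Proof.
move=> Hb Hab E.
have E' : (a * Z.abs_nat x = b * Z.abs_nat y)%nat.
  apply/eqP; rewrite -(eqn_add2r 0); apply/eqP; lia.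
have : (b %| Z.abs_nat x * a)%nat by rewrite mulnC E' dvdn_mulr.
rewrite Gauss_dvdl; last by rewrite coprime_sym.
case/dvdnP => q' Hq.
pose q := (if (0 <=? x)%Z then Z.of_nat q' else (- Z.of_nat q')%Z).
have Hx : x = (Z.of_nat b * q)%Z.
  rewrite /q; case: (Z.leb_spec 0 x) => H; lia.
exists q; split => //.
apply: (@Z.mul_reg_l _ _ (Z.of_nat b)); first lia.
rewrite -E Hx; ring.
Qed.

Section Main.
Variable t : nat.
Variable r : 'I_t -> nat.
Hypothesis r_pos : forall i, (0 < r i)%nat.
Hypothesis r_cop : forall i j, i != j -> coprime (r i) (r j).
Implicit Types u v w g f h s c a b : word t.
Implicit Types i j k : 'I_t.

Definition Ssub := Srel r.
Definition N1 := commsub Ssub (@Fall t).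
Definition N2 := commsub N1 (@Fall t).
Definition G2 := commsub (@Fall t) (@Fall t).
Definition G3 := commsub G2 (@Fall t).
Definition gp i := gen_pow i (r i).

Lemma S_nsub : nsub Ssub.
Proof.
apply: subgen_nsub => w h [u [g [Hu ->]]].
apply: subgen_base; exists u, (g ++ h); split => //.
by rewrite /wconj winv_cat -!catA.
Qed.
#[local] Existing Instance S_nsub.

Lemma Fall_nsub : nsub (@Fall t).
Proof. by constructor. Qed.
#[local] Existing Instance Fall_nsub.

Definition N1_nsub : nsub N1 := commsub_nsub S_nsub.
#[local] Existing Instance N1_nsub.
Definition N2_nsub : nsub N2 := commsub_nsub N1_nsub.
#[local] Existing Instance N2_nsub.
Definition G2_nsub : nsub G2 := commsub_nsub Fall_nsub.
#[local] Existing Instance G2_nsub.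

Lemma N1_S w : N1 w -> Ssub w. Proof. exact: commsub_sub. Qed.
Lemma N2_N1 w : N2 w -> N1 w. Proof. exact: commsub_sub. Qed.
Lemma N1_G2 w : N1 w -> G2 w.
Proof. apply: subgen_mono => u [a [b [_ [_ ->]]]]; by exists a, b. Qed.
Lemma N2_G3 w : N2 w -> G3 w.
Proof. apply: subgen_mono => u [a [b [Ha [_ ->]]]]; exists a, b; split => //; exact: N1_G2. Qed.
Lemma G3_G2 w : G3 w -> G2 w.
Proof. apply: subgen_mono => u [a [b [_ [_ ->]]]]; by exists a, b. Qed.

Lemma S_gp i : Ssub (gp i).
Proof.
apply: subgen_eq (_ : Ssub (wconj (gp i) [::])) _.
  by apply: subgen_base; exists (gp i), [::]; split => //; exists i.
by rewrite /wconj /= cats0.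
Qed.

Lemma phi_G2 i j w : G2 w -> hcentral (phi i j w).
Proof.
move: w; apply: (@subgen_min t _ (fun w => hcentral (phi i j w))).
- split.
  + by [].
  + move=> u v; rewrite /hcentral phi_cat.
    case: (phi i j u) => [[a1 b1] c1]; case: (phi i j v) => [[a2 b2] c2] /= [-> ->] [-> ->] //.
  + move=> u; rewrite /hcentral phi_inv.
    by case: (phi i j u) => [[a1 b1] c1] /= [-> ->].
  + by move=> u v H E; rewrite -(phi_weq i j E).
- move=> u [a [b [_ [_ ->]]]]; rewrite /wcomm !phi_cat !phi_inv /hcentral.
  case: (phi i j a) => [[a1 b1] c1]; case: (phi i j b) => [[a2 b2] c2] /=; split; ring.
Qed.

Lemma phi_G3 i j w : G3 w -> phi i j w = h1.
Proof.
move: w; apply: (@subgen_min t _ (fun w => phi i j w = h1)).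
- split.
  + by [].
  + by move=> u v; rewrite phi_cat => -> ->.
  + by move=> u; rewrite phi_inv => ->.
  + by move=> u v H E; rewrite -(phi_weq i j E).
- move=> u [a [b [Ha [_ ->]]]]; rewrite /wcomm !phi_cat !phi_inv.
  move: (phi_G2 i j Ha); case: (phi i j a) => [[a1 b1] c1] [/= -> ->].
  case: (phi i j b) => [[a2 b2] c2] /=; rewrite /h1; congr (_, _, _); ring.
Qed.

Definition ex j w := (phi j j w).1.1.

Lemma ex_cat j u v : ex j (u ++ v) = (ex j u + ex j v)%Z.
Proof. rewrite /ex phi_cat; by case: (phi j j u) => [[a1 b1] c1]; case: (phi j j v) => [[a2 b2] c2]. Qed.

Lemma ex_inv j u : ex j (winv u) = (- ex j u)%Z.
Proof. rewrite /ex phi_inv; by case: (phi j j u) => [[a1 b1] c1]. Qed.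

Lemma ex_wpow j g n : ex j (wpow g n) = (Z.of_nat n * ex j g)%Z.
Proof. elim: n => [|n IH] //; rewrite [wpow _ _]/= ex_cat IH Nat2Z.inj_succ; ring. Qed.

Lemma ex_zpow j g z : ex j (zpow g z) = (z * ex j g)%Z.
Proof.
rewrite /zpow; case: (Z.leb_spec 0 z) => H.
  rewrite ex_wpow Z2Nat.id //.
rewrite ex_wpow ex_inv Z2Nat.id; [ring | lia].
Qed.

Lemma ex_gx j i : ex j (gen_x i) = (if i == j then 1 else 0)%Z.
Proof.
rewrite /ex /gen_x phi_cons phi_nil hmulr1 /limg /=.
by case: (i == j).
Qed.

Lemma ex_gp j i : ex j (gp i) = (if i == j then Z.of_nat (r i) else 0)%Z.
Proof.
rewrite /gp gen_powE ex_wpow ex_gx; case: (i == j); lia.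
Qed.

Lemma ex_prodz_out j l m : j \notin l -> ex j (prodz [seq gp i | i <- l] m) = 0%Z.
Proof.
elim: l m => [|i l IH] m //=; rewrite inE negb_or => /andP [ne nl].
rewrite ex_cat ex_zpow IH // ex_gp eq_sym (negbTE ne); lia.
Qed.

Lemma ex_prodz_vanish l m : uniq l ->
  (forall j, j \in l -> ex j (prodz [seq gp i | i <- l] m) = 0%Z) ->
  weq (prodz [seq gp i | i <- l] m) [::].
Proof.
elim: l m => [|i l IH] m //= /andP [nil ul] H.
have Hi := H i (mem_head _ _).
rewrite /= ex_cat ex_zpow ex_prodz_out // ex_gp eqxx in Hi.
have Hm : m 0%nat = 0%Z by have := r_pos i; nia.
rewrite Hm zpow0 cat0s; apply: IH => // j Hj.
have := H j; rewrite inE Hj orbT => /(_ isT).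
by rewrite /= ex_cat Hm zpow0.
Qed.

Definition gens1 := [seq gp i | i <- enum 'I_t].

Lemma gens1_central g : g \in gens1 -> central N1 g.
Proof. by case/mapP => i _ ->; apply: central_commsub; apply: S_gp. Qed.

Lemma S_Span1 w : Ssub w -> Span N1 gens1 w.
Proof.
move: w; apply: (@subgen_min t _ (Span N1 gens1)).
- split; [exact: Span_one | exact: Span_mul gens1_central |
          exact: Span_inv gens1_central | exact: Span_weq].
- move=> u [x [g [[i ->] ->]]].
  apply: (Span_cong (Span_mem (N := N1) (_ : gp i \in gens1))).
    by apply: map_f; rewrite mem_enum.
  rewrite /cong /wconj !winv_cat winvK -!catA.
  apply: subgen_base; exists (winv (gp i)), g; split; first exact: Ninv (S_gp i).
  by split => //; rewrite /wcomm winvK.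
Qed.

Theorem part1 w : Ssub w /\ G2 w <-> N1 w.
Proof.
split; last by move=> H; split; [apply: N1_S | apply: N1_G2].
case=> Sw G2w; case: (S_Span1 Sw) => m Hm.
have Hz : forall j, ex j (prodz gens1 m) = 0%Z.
  move=> j; have := phi_G2 j j (N1_G2 Hm); rewrite /hcentral => [[H _]].
  have := phi_G2 j j G2w; rewrite /hcentral => [[H' _]].
  move: H; rewrite -/(ex j _) ex_cat ex_inv -/(ex j _) /ex H'; lia.
have E : weq (prodz gens1 m) [::] by apply: ex_prodz_vanish; [exact: enum_uniq | move=> j _; apply: Hz].
by move: Hm; rewrite E /cong /= cats0.
Qed.


Lemma cN2 c : N1 c -> central N2 c.
Proof. exact: central_commsub. Qed.

Lemma conj_N1 c h : N1 c -> cong N2 (wconj c h) c.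
Proof.
move=> Hc; rewrite /wconj (cN2 Hc h) cancL; reflexivity.
Qed.

Lemma commN1 s f : Ssub s -> N1 (wcomm s f).
Proof. by move=> Hs; apply: comm_mem. Qed.

Lemma bil_r s f h : Ssub s -> cong N2 (wcomm s (f ++ h)) (wcomm s f ++ wcomm s h).
Proof.
move=> Hs.
have E : weq (wcomm s (f ++ h)) (wcomm s h ++ wconj (wcomm s f) h).
  by rewrite /wcomm /wconj !winv_cat -!catA !cancR.
rewrite E (conj_N1 h (commN1 f Hs)) (cN2 (commN1 h Hs)); reflexivity.
Qed.

Lemma cong_solve_r (N : word t -> Prop) (HN : nsub N) (x y : word t) : cong N [::] (x ++ y) -> cong N y (winv x).
Proof.
move=> H; rewrite -[y]cat0s -(weq_Vmul x) -catA -H cats0; reflexivity.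
Qed.

Lemma bil_r_inv s f : Ssub s -> cong N2 (wcomm s (winv f)) (winv (wcomm s f)).
Proof.
move=> Hs; apply: cong_solve_r.
rewrite -bil_r // (weq_mulV f) comm_nil_r; reflexivity.
Qed.

Lemma bil_l s s' f : Ssub s -> Ssub s' ->
  cong N2 (wcomm (s ++ s') f) (wcomm s f ++ wcomm s' f).
Proof.
move=> Hs Hs'.
have E : weq (wcomm (s ++ s') f) (wconj (wcomm s f) s' ++ wcomm s' f).
  by rewrite /wcomm /wconj !winv_cat -!catA !cancR.
rewrite E (conj_N1 s' (commN1 f Hs)); reflexivity.
Qed.

Lemma bil_l_inv s f : Ssub s -> cong N2 (wcomm (winv s) f) (winv (wcomm s f)).
Proof.
move=> Hs; apply: cong_solve_r.
rewrite -bil_l //; last exact: Ninv.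
rewrite (weq_mulV s) comm_nil_l; reflexivity.
Qed.

Lemma bil_conj s g f : Ssub s -> cong N2 (wcomm (wconj s g) f) (wcomm s f).
Proof.
move=> Hs.
have E : weq (wconj s g) (s ++ wcomm s g) by rewrite /wcomm cancR.
rewrite E bil_l //; last exact: N1_S (commN1 g Hs).
have H2 : N2 (wcomm (wcomm s g) f) by apply: comm_mem; exact: commN1.
move/congN: H2 => ->; rewrite cats0; reflexivity.
Qed.

Lemma bil_pow s f n : Ssub s -> cong N2 (wpow (wcomm s f) n) (wcomm s (wpow f n)).
Proof.
move=> Hs; elim: n => [|n IH] /=.
  rewrite comm_nil_r; reflexivity.
rewrite bil_r // IH; reflexivity.
Qed.

Definition P := [seq p <- enum {: 'I_t * 'I_t} | ltn (val p.1) (val p.2)].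
Definition blk (p : 'I_t * 'I_t) :=
  [:: wcomm (gp p.1) (gen_x p.2); wcomm (gp p.2) (gen_x p.1)].
Definition gens2 := flatten [seq blk p | p <- P].

Lemma gens2_central g : g \in gens2 -> central N2 g.
Proof.
case/flatten_mapP => p _; rewrite !inE => /orP [] /eqP ->;
  apply: cN2; apply: commN1; exact: S_gp.
Qed.

Lemma Span2_gx i j : Span N2 gens2 (wcomm (gp i) (gen_x j)).
Proof.
case: (eqVneq i j) => [<-|ne].
  apply: (Span_weq (@Span_one _ N2 _ gens2)); symmetry; apply: comm_commute.
  by rewrite /gp gen_powE -[_ ++ wpow _ _]/(wpow _ (r i).+1) wpowSr.
apply: Span_mem; apply/flatten_mapP.
case: (ltngtP i j) => H.
- by exists (i, j); [rewrite mem_filter /= H mem_enum | rewrite inE eqxx].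
- by exists (j, i); [rewrite mem_filter /= H mem_enum | rewrite !inE eqxx orbT].
- by move/val_inj: H => H; rewrite H eqxx in ne.
Qed.

Lemma Span2_gp i f : Span N2 gens2 (wcomm (gp i) f).
Proof.
elim: f => [|[j b] f IH].
  apply: (Span_weq (@Span_one _ N2 _ gens2)); symmetry; exact: comm_nil_r.
apply: (Span_cong (Span_mul gens2_central _ IH)); last first.
  symmetry; rewrite -[(j, b) :: f]/([:: (j, b)] ++ f); apply: bil_r; exact: S_gp.
case: b.
  apply: (Span_cong (Span_inv gens2_central (Span2_gx i j))).
  have -> : [:: (j, true)] = winv (gen_x j) by [].
  symmetry; apply: bil_r_inv; exact: S_gp.
exact: Span2_gx.
Qed.

Lemma S_comm_Span2 s : Ssub s -> forall f, Span N2 gens2 (wcomm s f).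
Proof.
move=> Hs; suff : Ssub s /\ (forall f, Span N2 gens2 (wcomm s f)) by case.
move: s Hs; apply: (@subgen_min t _ (fun s => Ssub s /\ (forall f, Span N2 gens2 (wcomm s f)))).
- split.
  + split; first exact: N_one.
    move=> f; apply: (Span_weq (@Span_one _ N2 _ gens2)); symmetry; exact: comm_nil_l.
  + move=> u v [Su Hu] [Sv Hv]; split; first exact: Nmul.
    move=> f; apply: (Span_cong (Span_mul gens2_central (Hu f) (Hv f))).
    symmetry; exact: bil_l.
  + move=> u [Su Hu]; split; first exact: Ninv.
    move=> f; apply: (Span_cong (Span_inv gens2_central (Hu f))).
    symmetry; exact: bil_l_inv.
  + move=> u v [Su Hu] E; split; first exact: Neq Su E.
    by move=> f; apply: Span_weq (Hu f) _; rewrite E.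
- move=> u [x [g [[i ->] ->]]]; split.
    by apply: subgen_base; exists (gen_pow i (r i)), g; split => //; exists i.
  move=> f; apply: (Span_cong (Span2_gp i f)).
  symmetry; apply: bil_conj; exact: S_gp.
Qed.

Lemma N1_Span2 w : N1 w -> Span N2 gens2 w.
Proof.
move: w; apply: (@subgen_min t _ (Span N2 gens2)).
- split; [exact: Span_one | exact: Span_mul gens2_central |
          exact: Span_inv gens2_central | exact: Span_weq].
- by move=> u [a [b [Ha [_ ->]]]]; apply: S_comm_Span2.
Qed.

Lemma hinvK x : hinv (hinv x) = x.
Proof. case: x => [[a b] c] /=; congr (_, _, _); ring. Qed.

Lemma phi_comm i j u v : phi i j (wcomm u v) =
  (0%Z, 0%Z, ((phi i j u).1.1 * (phi i j v).1.2 - (phi i j v).1.1 * (phi i j u).1.2)%Z).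
Proof.
rewrite /wcomm !phi_cat !phi_inv.
case: (phi i j u) => [[a1 b1] c1]; case: (phi i j v) => [[a2 b2] c2] /=; congr (_, _, _); ring.
Qed.

Lemma phi_wpow_lin i j g n x y : phi i j g = (x, y, 0%Z) -> (x * y = 0)%Z ->
  phi i j (wpow g n) = ((Z.of_nat n * x)%Z, (Z.of_nat n * y)%Z, 0%Z).
Proof.
move=> E Hxy; elim: n => [|n IH]; first by [].
rewrite [wpow _ _]/= phi_cat IH E; cbn [hmul fst snd]; rewrite Nat2Z.inj_succ; congr (_, _, _); nia.
Qed.

Lemma phi_gx i j k : phi i j (gen_x k) =
  if k == i then (1%Z, 0%Z, 0%Z) else if k == j then (0%Z, 1%Z, 0%Z) else h1.
Proof.
rewrite /gen_x phi_cons phi_nil hmulr1 /limg /=.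
by case: (k == i); case: (k == j).
Qed.

Lemma phi_gp_out i j k : k != i -> k != j -> phi i j (gp k) = h1.
Proof.
move=> ni nj; rewrite /gp gen_powE; apply: phi_wpow.
by rewrite phi_gx (negbTE ni) (negbTE nj).
Qed.

Lemma phi_gx_out i j k : k != i -> k != j -> phi i j (gen_x k) = h1.
Proof. by move=> ni nj; rewrite phi_gx (negbTE ni) (negbTE nj). Qed.

Lemma phi_comm_h1l i j u v : phi i j u = h1 -> phi i j (wcomm u v) = h1.
Proof. by move=> E; rewrite phi_comm E /=; congr (_, _, _); ring. Qed.
Lemma phi_comm_h1r i j u v : phi i j v = h1 -> phi i j (wcomm u v) = h1.
Proof. by move=> E; rewrite phi_comm E /=; congr (_, _, _); ring. Qed.

Lemma phi_gp_i i j : i != j -> phi i j (gp i) = (Z.of_nat (r i), 0%Z, 0%Z).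
Proof.
move=> ne; rewrite /gp gen_powE (@phi_wpow_lin _ _ _ _ 1%Z 0%Z).
- by congr (_, _, _); ring.
- by rewrite phi_gx eqxx.
- by [].
Qed.

Lemma phi_gp_j i j : i != j -> phi i j (gp j) = (0%Z, Z.of_nat (r j), 0%Z).
Proof.
move=> ne; rewrite /gp gen_powE (@phi_wpow_lin _ _ _ _ 0%Z 1%Z).
- by congr (_, _, _); ring.
- by rewrite phi_gx eq_sym (negbTE ne) eqxx.
- by [].
Qed.

Lemma phi_blkA i j : i != j ->
  phi i j (wcomm (gp i) (gen_x j)) = (0%Z, 0%Z, Z.of_nat (r i)).
Proof.
move=> ne; rewrite phi_comm phi_gp_i // phi_gx eq_sym (negbTE ne) eqxx; cbn [fst snd].
by congr (_, _, _); ring.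
Qed.

Lemma phi_blkB i j : i != j ->
  phi i j (wcomm (gp j) (gen_x i)) = (0%Z, 0%Z, (- Z.of_nat (r j))%Z).
Proof.
move=> ne; rewrite phi_comm phi_gp_j // phi_gx eqxx; cbn [fst snd].
by congr (_, _, _); ring.
Qed.

Lemma other_pair (p q : 'I_t * 'I_t) : ltn (val p.1) (val p.2) -> ltn (val q.1) (val q.2) ->
  q != p -> forall g, g \in blk q -> phi p.1 p.2 g = h1.
Proof.
case: p => i j; case: q => a b /= Hij Hab ne g.
have [Ha|Hb] : (a != i) && (a != j) \/ (b != i) && (b != j).
  case: (boolP ((a != i) && (a != j))) => [H|H]; [by left | right].
  move: H; rewrite negb_and !negbK => /orP [] /eqP E; subst a.
    apply/andP; split; apply/eqP => E; subst b; first by rewrite ltnn in Hab.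
    by rewrite eqxx in ne.
  apply/andP; split; apply/eqP => E; subst b; last by rewrite ltnn in Hab.
  move: Hab Hij; lia.
- case/andP: Ha => ai aj; rewrite !inE => /orP [] /eqP ->.
    by apply: phi_comm_h1l; apply: phi_gp_out.
  by apply: phi_comm_h1r; apply: phi_gx_out.
- case/andP: Hb => bi bj; rewrite !inE => /orP [] /eqP ->.
    by apply: phi_comm_h1r; apply: phi_gx_out.
  by apply: phi_comm_h1l; apply: phi_gp_out.
Qed.

Lemma phi_prodz_h1 i j gs m : (forall g, g \in gs -> phi i j g = h1) ->
  phi i j (prodz gs m) = h1.
Proof.
elim: gs m => [|g gs IH] m H //=.
rewrite phi_cat phi_zpow1; last by apply: H; rewrite inE eqxx.
rewrite IH ?hmul1 // => h Hh; apply: H; by rewrite inE Hh orbT.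
Qed.

Lemma block_pair i j m0 m1 : i != j ->
  (Z.of_nat (r i) * m0 = Z.of_nat (r j) * m1)%Z ->
  N2 (zpow (wcomm (gp i) (gen_x j)) m0 ++ zpow (wcomm (gp j) (gen_x i)) m1).
Proof.
move=> ne E.
have [q [E0 E1]] := coprimeZ (r_pos j) (r_cop ne) E.
subst m0 m1.
set C := wcomm (gp i) (gp j).
have HA : cong N2 (zpow (wcomm (gp i) (gen_x j)) (Z.of_nat (r j) * q)) (zpow C q).
  rewrite zpowM; apply: zpow_cong; rewrite bil_pow; last exact: S_gp.
  rewrite -gen_powE; reflexivity.
have HB : cong N2 (zpow (wcomm (gp j) (gen_x i)) (Z.of_nat (r i) * q)) (winv (zpow C q)).
  rewrite zpowM -zpow_winv; apply: zpow_cong; rewrite bil_pow; last exact: S_gp.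
  rewrite -gen_powE /C winv_comm; reflexivity.
by rewrite congN HA HB (weq_mulV (zpow C q)); reflexivity.
Qed.

Lemma block_N2 (Q : seq ('I_t * 'I_t)) : uniq Q ->
  (forall p, p \in Q -> ltn (val p.1) (val p.2)) ->
  forall m, (forall p, p \in Q -> phi p.1 p.2 (prodz (flatten [seq blk p | p <- Q]) m) = h1) ->
  N2 (prodz (flatten [seq blk p | p <- Q]) m).
Proof.
elim: Q => [|p Q IH] /=; first by move=> _ _ m _; exact: N_one.
case/andP => pQ uQ Hlt m Hphi.
set R := prodz (flatten [seq blk p | p <- Q]) (fun k : nat => m k.+2).
have Rp : phi p.1 p.2 R = h1.
  apply: phi_prodz_h1 => g /flatten_mapP [q qQ gq].
  apply: (other_pair (Hlt p (mem_head _ _)) (Hlt q _) _ gq).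
    by rewrite inE qQ orbT.
  by apply/eqP => E; subst q; rewrite qQ in pQ.
have Hlp := Hlt p (mem_head _ _).
have ne : p.1 != p.2 by apply/eqP => E; rewrite E ltnn in Hlp.
rewrite catA; apply: Nmul.
  apply: block_pair => //.
  have := Hphi p (mem_head _ _); rewrite /= -/R.
  rewrite !phi_cat Rp hmulr1 !phi_zpowc; first last.
  - by rewrite /hcentral phi_blkA.
  - by rewrite /hcentral phi_blkB.
  rewrite phi_blkA // phi_blkB //; cbn [hmul fst snd] => H; have E := f_equal snd H; rewrite /h1 in E; cbn [snd] in E; nia.
apply: IH => //.
  by move=> q qQ; apply: Hlt; rewrite inE qQ orbT.
move=> q qQ.
have qp : p != q by apply/eqP => E; subst q; rewrite qQ in pQ.
have Hlq : ltn (val q.1) (val q.2) by apply: Hlt; rewrite inE qQ orbT.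
have := Hphi q; rewrite inE qQ orbT => /(_ isT) /=.
rewrite !phi_cat !phi_zpow1 ?hmul1 //.
- by apply: (other_pair Hlq Hlp qp); rewrite !inE eqxx orbT.
- by apply: (other_pair Hlq Hlp qp); rewrite !inE eqxx.
Qed.

Theorem part2 w : Ssub w /\ G3 w <-> N2 w.
Proof.
split; last first.
  by move=> H; split; [apply: N1_S; apply: N2_N1 | apply: N2_G3].
case=> Sw G3w.
have N1w : N1 w by apply/part1; split => //; apply: G3_G2.
case: (N1_Span2 N1w) => m Hm.
suff : N2 (prodz gens2 m) by rewrite -Hm.
apply: block_N2.
- by apply: filter_uniq; apply: enum_uniq.
- by move=> p; rewrite mem_filter => /andP [].
move=> p _.
have := phi_G3 p.1 p.2 (N2_G3 Hm).
rewrite phi_cat phi_inv (phi_G3 _ _ G3w) hmul1 => E.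
by rewrite -(hinvK (phi _ _ _)) E.
Qed.

Theorem part3 w : N1 w /\ G3 w <-> N2 w.
Proof.
split.
  by case=> H1 H3; apply/part2; split => //; apply: N1_S.
by move=> H; split; [apply: N2_N1 | apply: N2_G3].
Qed.

End Main.


Theorem corollary2p2 (t : nat) (r : 'I_t -> nat) :
  1 <= t ->
  (forall i, 0 < r i) ->
  (forall i j, i != j -> coprime (r i) (r j)) ->
  let S := Srel r in
  set_eq (set_cap S (@gamma t 2)) (rho S 2) /\
  set_eq (set_cap S (@gamma t 3)) (rho S 3) /\
  set_eq (set_cap (rho S 2) (@gamma t 3)) (rho S 3).
Proof.
move=> _ Hpos Hcop S.
split; [|split] => w; rewrite /set_cap.
- exact: (part1 Hpos w).
- exact: (part2 Hpos Hcop w).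
- exact: (part3 Hpos Hcop w).
Qed.
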